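(* Let $(b,c)$ be a weighted graph over $V$ with $n(x)>0$ for all $x\in V$, let $m$ be a measure on $V$, and let $U\subseteq V$ be nonempty. Then for all $u\in D(Q_U)$ $$d_U\Big(1-\sqrt{1-\alpha_{b,c,n}(U)^2}\Big)\|u\|_m^2\le Q_U(u)\le D_U\Big(1+\sqrt{1-\alpha_{b,c,n}(U)^2}\Big)\|u\|_m^2 .$$ If moreover $D_U<\infty$, then for all $u\in D(Q_U)$ $$\Big(D_U-\sqrt{D_U^2-\alpha_{b,c,m}(U)^2}\Big)\|u\|_m^2\le Q_U(u)\le\Big(D_U+\sqrt{D_U^2-\alpha_{b,c,m}(U)^2}\Big)\|u\|_m^2 .$$
   Context: Let $V$ be a countably infinite set. A weighted graph over $V$ is a pair $(b,c)$ of maps $b:V\times V\to[0,\infty)$ and $c:V\to[0,\infty)$ with $b(x,x)=0$, $b(x,y)=b(y,x)$ and $\sum_{y\in V}b(x,y)<\infty$ for all $x,y\in V$. A measure on $V$ is a map $m:V\to(0,\infty)$, and $\|u\|_m^2=\sum_x m(x)u(x)^2$. Define $Q^{\max}(u)=\frac12\sum_{x,y}b(x,y)(u(x)-u(y))^2+\sum_x c(x)u(x)^2$; $Q=Q_{b,c,m}$ is the closure in $\ell^2(V,m)$ of the restriction of $Q^{\max}$ to finitely supported functions. For $U\subseteq V$, $Q_U$ is the closure of the restriction of $Q$ to finitely supported functions with support in $U$ (a form on $\ell^2(U,m)$), and $L_U$ its associated selfadjoint operator. Let $n(x)=\sum_y b(x,y)+c(x)$ (when $n>0$ it is itself a measure),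 $d(x)=n(x)/m(x)$, $d_U=\inf_{x\in U}d(x)$, $D_U=\sup_{x\in U}d(x)$. For finite $W$ let $|\partial W|=\sum_{x\in W,y\notin W}b(x,y)+\sum_{x\in W}c(x)$, and for a measure $\mu$ on $V$ set $\alpha_{b,c,\mu}(U)=\inf\{|\partial W|/\mu(W):\ W\subseteq U\text{ finite, nonempty}\}$, $\mu(W)=\sum_{x\in W}\mu(x)$. *)

(* Defs.v *)
From Stdlib Require Import Reals List Classical ClassicalDescription.
Import ListNotations.
Open Scope R_scope.

Definition fin_sum {T : Type} (f : T -> R) (l : list T) : R :=
  fold_right (fun x acc => f x + acc) 0 l.

(* Sum of a NONNEGATIVE family over an arbitrary (countable) index type:
   [has_sum f s] means the (unordered) series sum_x f x converges to s,
   i.e. s is the supremum of all finite partial sums. *)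
Definition has_sum {T : Type} (f : T -> R) (s : R) : Prop :=
  is_lub (fun r => exists l : list T, NoDup l /\ r = fin_sum f l) s.

Definition is_inf (E : R -> Prop) (a : R) : Prop :=
  (forall r, E r -> a <= r) /\ (forall l, (forall r, E r -> l <= r) -> l <= a).
Definition is_sup (E : R -> Prop) (a : R) : Prop := is_lub E a.

Definition indic (P : Prop) : R :=
  if excluded_middle_informative P then 1 else 0.

Definition norm2 {V : Type} (m : V -> R) (u : V -> R) (r : R) : Prop :=
  has_sum (fun x => m x * u x ^ 2) r.

Definition Qmax {V : Type} (b : V -> V -> R) (c : V -> R) (u : V -> R) (q : R)
  : Prop :=
  exists s1 s2,
    has_sum (fun p : V * V => b (fst p) (snd p) * (u (fst p) - u (snd p)) ^ 2) s1 /\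
    has_sum (fun x => c x * u x ^ 2) s2 /\
    q = / 2 * s1 + s2.

Definition fin_supp_in {V : Type} (U : V -> Prop) (u : V -> R) : Prop :=
  exists l : list V, forall x, u x <> 0 -> In x l /\ U x.

(* Graph of the closed form Q_U: u \in D(Q_U) and Q_U(u) = q.  Q_U is the
   closure in l^2(V,m) of Q restricted to finitely supported functions with
   support in U (on which Q coincides with Q^max): u is the l^2-limit of a
   Q-Cauchy sequence phi_k of such functions and q = lim Q(phi_k). *)
Definition QU_graph {V : Type} (b : V -> V -> R) (c : V -> R) (m : V -> R)
  (U : V -> Prop) (u : V -> R) (q : R) : Prop :=
  exists phi : nat -> V -> R,
    (forall k, fin_supp_in U (phi k)) /\
    (exists r : nat -> R,
        (forall k, norm2 m (fun x => phi k x - u x) (r k)) /\ Un_cv r 0) /\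
    (forall eps, eps > 0 -> exists N, forall j k, (j >= N)%nat -> (k >= N)%nat ->
        forall qjk, Qmax b c (fun x => phi j x - phi k x) qjk -> qjk < eps) /\
    (exists qs : nat -> R, (forall k, Qmax b c (phi k) (qs k)) /\ Un_cv qs q).

Definition bdry {V : Type} (b : V -> V -> R) (c : V -> R) (W : list V) (s : R)
  : Prop :=
  exists s1,
    has_sum (fun p : V * V => indic (In (fst p) W /\ ~ In (snd p) W) * b (fst p) (snd p)) s1 /\
    s = s1 + fin_sum c W.

Definition is_alpha {V : Type} (b : V -> V -> R) (c : V -> R) (mu : V -> R)
  (U : V -> Prop) (a : R) : Prop :=
  is_inf (fun r => exists W : list V, W <> [] /\ NoDup W /\
             (forall x, In x W -> U x) /\
             exists s, bdry b c W s /\ r = s / fin_sum mu W) a.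

(* Main.v *)
Require Import Defs.
From Stdlib Require Import Reals List Lra Classical ClassicalEpsilon ClassicalDescription FunctionalExtensionality FinFun Lia.
Import ListNotations.
Open Scope R_scope.

Section FS.
Context {T : Type}.

Lemma fin_sum_nil (f : T -> R) : fin_sum f [] = 0.
Proof. reflexivity. Qed.
Lemma fin_sum_cons (f : T -> R) a l : fin_sum f (a :: l) = f a + fin_sum f l.
Proof. reflexivity. Qed.

Lemma fin_sum_app (f : T -> R) l1 l2 : fin_sum f (l1 ++ l2) = fin_sum f l1 + fin_sum f l2.
Proof. induction l1; simpl; [ring| rewrite IHl1; ring]. Qed.

Lemma fin_sum_plus (f g : T -> R) l : fin_sum (fun x => f x + g x) l = fin_sum f l + fin_sum g l.
Proof. induction l; simpl; [ring| rewrite IHl; ring]. Qed.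

Lemma fin_sum_scal (f : T -> R) k l : fin_sum (fun x => k * f x) l = k * fin_sum f l.
Proof. induction l; simpl; [ring| rewrite IHl; ring]. Qed.

Lemma fin_sum_le (f g : T -> R) l : (forall x, In x l -> f x <= g x) -> fin_sum f l <= fin_sum g l.
Proof. induction l; simpl; intros H; [lra|]. pose proof (H a (or_introl eq_refl)).
  assert (fin_sum f l <= fin_sum g l) by (apply IHl; auto). lra. Qed.

Lemma fin_sum_ext (f g : T -> R) l : (forall x, In x l -> f x = g x) -> fin_sum f l = fin_sum g l.
Proof. induction l; simpl; intros H; [lra|]. rewrite H by auto. rewrite IHl by auto. ring. Qed.

Lemma fin_sum_nonneg (f : T -> R) l : (forall x, In x l -> 0 <= f x) -> 0 <= fin_sum f l.
Proof. intros H. replace 0 with (fin_sum (fun _ => 0) l). apply fin_sum_le; auto.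
  induction l; simpl; auto. rewrite IHl; auto with datatypes. ring. Qed.

Lemma fin_sum_sub (f : T -> R) (L l : list T) :
  NoDup L -> (forall x, 0 <= f x) -> (forall x, In x L -> f x <> 0 -> In x l) ->
  fin_sum f L <= fin_sum f l.
Proof.
  intros HL Hf; revert l; induction HL as [|a L Ha HL IH]; intros l Hs.
  - simpl. apply fin_sum_nonneg; auto.
  - simpl. destruct (Req_dec (f a) 0) as [E|E].
    + rewrite E. assert (fin_sum f L <= fin_sum f l); [|lra].
      apply IH. intros; apply Hs; simpl; auto.
    + destruct (in_split a l (Hs a (or_introl eq_refl) E)) as [l1 [l2 ->]].
      rewrite fin_sum_app; simpl.
      assert (fin_sum f L <= fin_sum f (l1 ++ l2)); [|rewrite fin_sum_app in H; lra].
      apply IH. intros x Hx Hfx. assert (Hx' := Hs x (or_intror Hx) Hfx).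
      apply in_app_or in Hx'. apply in_or_app. destruct Hx' as [?|[<-|?]]; auto.
      contradiction.
Qed.

End FS.

Definition dec_eq {T : Type} : forall x y : T, {x = y} + {x <> y} :=
  fun x y => excluded_middle_informative (x = y).

Section HS.
Context {T : Type}.
Implicit Types f g : T -> R.

Lemma has_sum_ub f s L : has_sum f s -> NoDup L -> fin_sum f L <= s.
Proof. intros [H _] HL. apply H. eauto. Qed.

Lemma has_sum_nonneg f s : has_sum f s -> 0 <= s.
Proof. intros H. apply (has_sum_ub f s []) in H; [simpl in H; lra| constructor]. Qed.

Lemma has_sum_lub f s M : has_sum f s -> (forall L, NoDup L -> fin_sum f L <= M) -> s <= M.
Proof. intros [_ H] HM. apply H. intros r [L [HL ->]]. auto. Qed.

Lemma has_sum_approx f s eps : has_sum f s -> eps > 0 -> exists L, NoDup L /\ s - eps < fin_sum f L.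
Proof. intros H He. apply NNPP; intro Hn.
  assert (s <= s - eps); [|lra]. apply (has_sum_lub f); auto.
  intros L HL. apply Rnot_lt_le. intro. apply Hn; eauto. Qed.

Lemma has_sum_unique f s t : has_sum f s -> has_sum f t -> s = t.
Proof. intros H1 H2. apply Rle_antisym.
  - apply (has_sum_lub f s); auto. intros; eapply has_sum_ub; eauto.
  - apply (has_sum_lub f t); auto. intros; eapply has_sum_ub; eauto. Qed.

Lemma has_sum_exists f B : (forall x, 0 <= f x) -> (forall L, NoDup L -> fin_sum f L <= B) ->
  exists s, has_sum f s.
Proof. intros Hf HB.
  destruct (completeness (fun r => exists L : list T, NoDup L /\ r = fin_sum f L)) as [s Hs].
  - exists B. intros r [L [HL ->]]. auto.
  - exists 0, []. split; [constructor|reflexivity].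
  - exists s; exact Hs. Qed.

Lemma has_sum_fin f l : NoDup l -> (forall x, 0 <= f x) -> (forall x, f x <> 0 -> In x l) ->
  has_sum f (fin_sum f l).
Proof. intros Hl Hf Hs. split.
  - intros r [L [HL ->]]. apply fin_sum_sub; auto.
  - intros b Hb. apply Hb. eauto. Qed.

Lemma fin_sum_incl f L1 L2 : NoDup L1 -> (forall x, 0 <= f x) -> incl L1 L2 -> fin_sum f L1 <= fin_sum f L2.
Proof. intros. apply fin_sum_sub; auto. Qed.

Lemma has_sum_plus f g a b : (forall x, 0 <= f x) -> (forall x, 0 <= g x) ->
  has_sum f a -> has_sum g b -> has_sum (fun x => f x + g x) (a + b).
Proof. intros Hf Hg Ha Hb. split.
  - intros r [L [HL ->]]. rewrite fin_sum_plus.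
    pose proof (has_sum_ub f a L Ha HL); pose proof (has_sum_ub g b L Hb HL). lra.
  - intros M HM. apply Rnot_lt_le; intro Hlt.
    set (eps := (a + b - M) / 3).
    assert (eps > 0) by (unfold eps; lra).
    destruct (has_sum_approx f a eps Ha H) as [L1 [H1 H1']].
    destruct (has_sum_approx g b eps Hb H) as [L2 [H2 H2']].
    set (L := nodup dec_eq (L1 ++ L2)).
    assert (HL : NoDup L) by apply NoDup_nodup.
    assert (fin_sum f L1 <= fin_sum f L).
    { apply fin_sum_incl; auto. intros x Hx. apply nodup_In. apply in_or_app; auto. }
    assert (fin_sum g L2 <= fin_sum g L).
    { apply fin_sum_incl; auto. intros x Hx. apply nodup_In. apply in_or_app; auto. }
    assert (HH : fin_sum (fun x => f x + g x) L <= M) by (apply HM; eauto).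
    rewrite fin_sum_plus in HH. unfold eps in *. lra.
Qed.

Lemma has_sum_zero : has_sum (fun _ : T => 0) 0.
Proof. change (has_sum (fun _ : T => 0) (fin_sum (fun _ : T => 0) [])).
  apply has_sum_fin; [constructor| intros; lra| intros x H; lra]. Qed.

Lemma has_sum_scal f k s : 0 <= k -> has_sum f s -> has_sum (fun x => k * f x) (k * s).
Proof. intros Hk Hs. destruct (Req_dec k 0) as [->|Hk0].
  - replace (fun x => 0 * f x) with (fun _ : T => 0) by (apply functional_extensionality; intros; ring).
    rewrite Rmult_0_l. apply has_sum_zero.
  - split.
    + intros r [L [HL ->]]. rewrite fin_sum_scal. apply Rmult_le_compat_l; auto.
      eapply has_sum_ub; eauto.
    + intros M HM. assert (s <= M / k).
      { apply (has_sum_lub f); auto. intros L HL.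
        assert (k * fin_sum f L <= M) by (rewrite <- fin_sum_scal; apply HM; eauto).
        apply (Rmult_le_reg_l k); [lra|]. field_simplify; lra. }
      apply (Rmult_le_compat_l k) in H; [|lra]. field_simplify in H; lra.
Qed.

Lemma has_sum_le f g s t : (forall x, f x <= g x) -> has_sum f s -> has_sum g t -> s <= t.
Proof. intros H Hs Ht. apply (has_sum_lub f); auto. intros L HL.
  apply Rle_trans with (fin_sum g L). apply fin_sum_le; auto. eapply has_sum_ub; eauto. Qed.

Lemma has_sum_dom f g t : (forall x, 0 <= f x) -> (forall x, f x <= g x) -> has_sum g t ->
  exists s, has_sum f s.
Proof. intros Hf H Ht. apply (has_sum_exists f t); auto. intros L HL.
  apply Rle_trans with (fin_sum g L). apply fin_sum_le; auto. eapply has_sum_ub; eauto. Qed.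

Lemma has_sum_ext f g s : (forall x, f x = g x) -> has_sum f s -> has_sum g s.
Proof. intros H. replace g with f; auto. apply functional_extensionality; auto. Qed.

End HS.

Lemma has_sum_swap {A B : Type} (f : A * B -> R) s :
  has_sum f s -> has_sum (fun p => f (snd p, fst p)) s.
Proof. intros Hs. 
  assert (Hfs : forall L : list (B*A), fin_sum (fun p => f (snd p, fst p)) L = fin_sum f (map (fun p => (snd p, fst p)) L)).
  { induction L; simpl; auto. rewrite IHL. reflexivity. }
  assert (Hsf : forall L : list (A*B), fin_sum f (map (fun p => (snd p, fst p)) (map (fun p => (snd p, fst p)) L)) = fin_sum f L).
  { intros L. rewrite map_map. simpl. rewrite map_ext with (g := fun x => x). rewrite map_id; auto.
    intros [x y]; reflexivity. }
  assert (Hinj : forall C D : Type, Injective (fun p : C * D => (snd p, fst p))).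
  { intros C D [x y] [x' y'] H. simpl in H. inversion H; auto. }
  split.
  - intros r [L [HL ->]]. rewrite Hfs. apply has_sum_ub; auto. apply Injective_map_NoDup; auto.
  - intros M HM. apply (has_sum_lub f); auto. intros L HL.
    rewrite <- Hsf. rewrite <- Hfs. apply HM. exists (map (fun p => (snd p, fst p)) L). split; auto.
    apply Injective_map_NoDup; auto.
Qed.

Definition bdec (P : Prop) : bool := if excluded_middle_informative P then true else false.
Lemma bdec_true P : bdec P = true <-> P.
Proof. unfold bdec; destruct (excluded_middle_informative P); split; intros; auto; discriminate. Qed.

Lemma fin_sum_filter {T} (F : T -> R) (p : T -> bool) L :
  fin_sum F L = fin_sum F (filter p L) + fin_sum F (filter (fun x => negb (p x)) L).
Proof. induction L; simpl; [ring|]. destruct (p a); simpl; rewrite IHL; ring. Qed.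

Lemma fst_const_sum {V} (b : V -> V -> R) (h : V -> R) a (L : list (V*V)) :
  NoDup L -> (forall p, In p L -> fst p = a) ->
  NoDup (map snd L) /\
  fin_sum (fun p => b (fst p) (snd p) * h (fst p)) L = h a * fin_sum (b a) (map snd L).
Proof. induction 1 as [|p L Hp HL IH]; intros Hf; simpl.
  - split; [constructor| ring].
  - destruct IH as [IH1 IH2]. intros; apply Hf; simpl; auto. split.
    + constructor; auto. intro Hin. apply in_map_iff in Hin. destruct Hin as [q [Hq Hq']].
      apply Hp. replace p with q; auto.
      assert (E1 : fst q = a) by (apply Hf; simpl; auto).
      assert (E2 : fst p = a) by (apply Hf; simpl; auto).
      destruct p, q. simpl in *. subst. reflexivity.
    + rewrite IH2. rewrite (Hf p) by (simpl; auto). ring.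
Qed.

Lemma fubini_le {V} (b : V -> V -> R) (deg h : V -> R) :
  (forall x y, 0 <= b x y) -> (forall x, has_sum (b x) (deg x)) -> (forall x, 0 <= h x) ->
  forall l L, NoDup L -> (forall p, In p L -> h (fst p) <> 0 -> In (fst p) l) ->
  fin_sum (fun p => b (fst p) (snd p) * h (fst p)) L <= fin_sum (fun x => deg x * h x) l.
Proof.
  intros Hb Hd Hh l; induction l as [|a l IH]; intros L HL Hs.
  - simpl. change 0 with (fin_sum (fun p : V*V => b (fst p) (snd p) * h (fst p)) []).
    apply fin_sum_sub; auto. intros; apply Rmult_le_pos; auto.
    intros p Hp Hne. exfalso. apply (Hs p Hp). intro E. apply Hne. rewrite E; ring.
  - rewrite (fin_sum_filter _ (fun p => bdec (fst p = a)) L). simpl.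
    destruct (fst_const_sum b h a (filter (fun p => bdec (fst p = a)) L)) as [H1 H2].
    + apply NoDup_filter; auto.
    + intros p Hp. apply filter_In in Hp. apply bdec_true. apply Hp.
    + rewrite H2.
      assert (fin_sum (b a) (map snd (filter (fun p => bdec (fst p = a)) L)) <= deg a)
        by (apply has_sum_ub; auto).
      assert (h a * fin_sum (b a) (map snd (filter (fun p => bdec (fst p = a)) L)) <= deg a * h a).
      { rewrite (Rmult_comm (deg a)). apply Rmult_le_compat_l; auto. }
      assert (fin_sum (fun p => b (fst p) (snd p) * h (fst p)) (filter (fun x => negb (bdec (fst x = a))) L)
        <= fin_sum (fun x => deg x * h x) l); [|lra].
      apply IH. apply NoDup_filter; auto.
      intros p Hp Hne. apply filter_In in Hp. destruct Hp as [Hp Hp'].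
      destruct (Hs p Hp Hne) as [E|E]; auto.
      exfalso. assert (bdec (fst p = a) = true) by (apply bdec_true; auto).
      rewrite H3 in Hp'. discriminate.
Qed.

Lemma indic_T (P : Prop) : P -> indic P = 1.
Proof. intros HP. unfold indic; destruct (excluded_middle_informative P) as [h|h]; [reflexivity| contradiction]. Qed.
Lemma indic_F (P : Prop) : ~ P -> indic P = 0.
Proof. intros HP. unfold indic; destruct (excluded_middle_informative P) as [h|h]; [contradiction| reflexivity]. Qed.

Lemma fin_sum_indic {T} (h : T -> R) (P : T -> Prop) l :
  fin_sum (fun x => h x * indic (P x)) l = fin_sum h (filter (fun x => bdec (P x)) l).
Proof. induction l; simpl; [reflexivity|]. unfold bdec at 1.
  destruct (excluded_middle_informative (P a)).
  - rewrite indic_T by auto. simpl. rewrite IHl. ring.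
  - rewrite indic_F by auto. rewrite IHl. ring. Qed.

Lemma fin_sum_zero {T} (l : list T) : fin_sum (fun _ => 0) l = 0.
Proof. induction l; simpl; auto. rewrite IHl; ring. Qed.

Lemma exists_min {T} (f : T -> R) (P : T -> Prop) l :
  (exists x, In x l /\ P x) -> exists x0, In x0 l /\ P x0 /\ forall x, In x l -> P x -> f x0 <= f x.
Proof. induction l as [|a l IH]; intros [x [Hx HP]]; [destruct Hx|].
  destruct (classic (exists x, In x l /\ P x)) as [He|He].
  - destruct (IH He) as [x1 [H1 [H2 H3]]].
    destruct (classic (P a /\ f a <= f x1)) as [Ha|Ha].
    + exists a. split; [simpl; auto|split; [tauto|]]. intros y [<-|Hy] Hy'; [lra|].
      specialize (H3 y Hy Hy'); lra.
    + exists x1. split; [simpl; auto|split; auto]. intros y [<-|Hy] Hy'; auto.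
      apply Rnot_lt_le. intro. apply Ha. split; auto; lra.
  - exists a. destruct Hx as [<-|Hx]; [|exfalso; apply He; eauto].
    split; [simpl; auto|split; auto]. intros y [<-|Hy] Hy'; [lra|]. exfalso; apply He; eauto.
Qed.

Lemma filter_length_lt {T} (p q : T -> bool) l x0 :
  (forall x, In x l -> q x = true -> p x = true) -> In x0 l -> p x0 = true -> q x0 = false ->
  (length (filter q l) < length (filter p l))%nat.
Proof. induction l as [|a l IH]; intros Hqp Hx0 Hp Hq; [destruct Hx0|].
  assert (Hle : forall l', (forall x, In x l' -> q x = true -> p x = true) ->
     (length (filter q l') <= length (filter p l'))%nat).
  { induction l' as [|b l' IH']; simpl; intros H; auto.
    destruct (q b) eqn:E1. rewrite (H b) by auto. simpl. apply le_n_S, IH'; auto.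
    destruct (p b); simpl; auto. }
  simpl. destruct Hx0 as [->|Hx0].
  - rewrite Hp, Hq. simpl. apply Nat.lt_succ_r. apply Hle. intros; apply Hqp; simpl; auto.
  - destruct (q a) eqn:E1.
    + rewrite (Hqp a) by (simpl; auto). simpl. apply -> Nat.succ_lt_mono. apply IH; auto.
      intros; apply Hqp; simpl; auto.
    + destruct (p a); simpl.
      * apply Nat.lt_lt_succ_r. apply IH; auto. intros; apply Hqp; simpl; auto.
      * apply IH; auto. intros; apply Hqp; simpl; auto.
Qed.

Section Coarea.
Context {V : Type} (b : V -> V -> R) (c mu : V -> R) (U : V -> Prop) (alpha : R).
Hypothesis Hb0 : forall x y, 0 <= b x y.
Hypothesis Hbsym : forall x y, b x y = b y x.
Hypothesis Hc0 : forall x, 0 <= c x.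
Hypothesis Halpha : forall W, W <> [] -> NoDup W -> (forall x, In x W -> U x) ->
  forall s, bdry b c W s -> alpha * fin_sum mu W <= s.

Definition Afun (f : V -> R) := fun p : V * V => b (fst p) (snd p) * Rabs (f (fst p) - f (snd p)).

Lemma Afun_nonneg f p : 0 <= Afun f p.
Proof. unfold Afun. apply Rmult_le_pos; auto. apply Rabs_pos. Qed.

Lemma coarea_zero (f : V -> R) l : (forall x, 0 <= f x) -> (forall x, In x l -> f x = 0) ->
  forall sA, has_sum (Afun f) sA ->
  alpha * fin_sum (fun x => mu x * f x) l <= / 2 * sA + fin_sum (fun x => c x * f x) l.
Proof. intros Hf Hz sA HA.
    rewrite (fin_sum_ext _ (fun _ => 0)) by (intros x Hx; rewrite Hz; auto; ring).
    assert (0 <= fin_sum (fun x => c x * f x) l) by (apply fin_sum_nonneg; intros; apply Rmult_le_pos; auto).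
    assert (0 <= sA) by (eapply has_sum_nonneg; eauto).
    rewrite fin_sum_zero. lra.
Qed.

Lemma coarea_k : forall (k : nat) (f : V -> R) l, NoDup l -> (forall x, 0 <= f x) ->
  (forall x, f x <> 0 -> In x l /\ U x) ->
  (length (filter (fun x => bdec (f x <> 0%R)) l) <= k)%nat ->
  forall sA, has_sum (Afun f) sA ->
  alpha * fin_sum (fun x => mu x * f x) l <= / 2 * sA + fin_sum (fun x => c x * f x) l.
Proof.
  induction k as [|k IH]; intros f l Hl Hf Hs Hk sA HA.
  - apply coarea_zero; auto.
    intros x Hx. apply NNPP; intro Hne. 
    assert (In x (filter (fun x => bdec (f x <> 0)) l)) by (apply filter_In; split; auto; apply bdec_true; auto).
    destruct (filter (fun x => bdec (f x <> 0)) l); [destruct H| simpl in Hk; lia].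
  - destruct (classic (exists x, In x l /\ f x <> 0)) as [Hex|Hnex].
    2: { apply coarea_zero; auto. intros x Hx. apply NNPP; intro Hne. apply Hnex; eauto. }
    destruct (exists_min f (fun x => f x <> 0) l Hex) as [x0 [Hx0l [Hx0 Hmin]]].
    set (t := f x0).
    assert (Ht : 0 < t) by (pose proof (Hf x0); unfold t; lra).
    set (W := filter (fun x => bdec (f x <> 0)) l).
    assert (HW : forall x, In x W <-> f x <> 0).
    { intros x. unfold W. rewrite filter_In. rewrite bdec_true. split; [tauto|].
      intros H; split; auto. apply Hs; auto. }
    assert (Hge : forall x, f x <> 0 -> t <= f x).
    { intros x Hx. apply Hmin; auto. apply Hs; auto. }
    set (g := fun x => f x - t * indic (f x <> 0)).
    assert (Hg0 : forall x, 0 <= g x).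
    { intros x. unfold g. destruct (classic (f x <> 0)) as [H|H].
      - rewrite indic_T by auto. pose proof (Hge x H). lra.
      - rewrite indic_F by auto. apply NNPP in H. rewrite H. lra. }
    assert (Hgf : forall x, g x <> 0 -> f x <> 0).
    { intros x Hg Hfx. apply Hg. unfold g. rewrite indic_F by tauto. rewrite Hfx. ring. }
    assert (Hgx0 : g x0 = 0).
    { unfold g. rewrite indic_T by auto. fold t. ring. }
    assert (Hk' : (length (filter (fun x => bdec (g x <> 0%R)) l) <= k)%nat).
    { assert (length (filter (fun x => bdec (g x <> 0%R)) l) < length (filter (fun x => bdec (f x <> 0%R)) l))%nat; [|lia].
      apply filter_length_lt with x0; auto.
      - intros x _ Hq. apply bdec_true. apply (proj1 (bdec_true _)) in Hq. apply Hgf; exact Hq.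
      - apply bdec_true; auto.
      - destruct (bdec (g x0 <> 0)) eqn:E; auto. apply (proj1 (bdec_true _)) in E. contradiction. }
    set (Bf := fun p : V * V => indic (In (fst p) W /\ ~ In (snd p) W) * b (fst p) (snd p)).
    assert (HBf0 : forall p, 0 <= Bf p).
    { intros p. unfold Bf, indic. destruct (excluded_middle_informative _); [rewrite Rmult_1_l; auto| lra]. }
    assert (Hpt : forall p, Afun f p = Afun g p + t * Bf p + t * Bf (snd p, fst p)).
    { intros [x y]. unfold Afun, Bf, g; simpl. rewrite (Hbsym y x).
      destruct (classic (f x <> 0)) as [Hx|Hx]; destruct (classic (f y <> 0)) as [Hy|Hy].
      - rewrite (indic_T (f x <> 0)), (indic_T (f y <> 0)) by auto.
        rewrite !indic_F by (rewrite !HW; tauto).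
        replace (f x - t * 1 - (f y - t * 1)) with (f x - f y) by ring. ring.
      - apply NNPP in Hy. rewrite (indic_T (f x <> 0)) by auto. rewrite (indic_F (f y <> 0)) by tauto.
        rewrite (indic_T (In x W /\ _)) by (rewrite !HW; tauto).
        rewrite (indic_F (In y W /\ _)) by (rewrite !HW; tauto).
        rewrite Hy. pose proof (Hge x Hx).
        rewrite !Rabs_right by lra. ring.
      - apply NNPP in Hx. rewrite (indic_T (f y <> 0)) by auto. rewrite (indic_F (f x <> 0)) by tauto.
        rewrite (indic_F (In x W /\ _)) by (rewrite !HW; tauto).
        rewrite (indic_T (In y W /\ _)) by (rewrite !HW; tauto).
        rewrite Hx. pose proof (Hge y Hy).
        rewrite !Rabs_left1 by lra. ring.
      - apply NNPP in Hx. apply NNPP in Hy. rewrite !indic_F by (rewrite ?HW; tauto).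
        rewrite Hx, Hy. replace (0 - t * 0 - (0 - t * 0)) with (0 - 0) by ring. ring. }
    assert (HBle : forall p, Bf p <= / t * Afun f p).
    { intros p. rewrite Hpt. pose proof (Afun_nonneg g p). pose proof (HBf0 (snd p, fst p)).
      pose proof (HBf0 p). apply (Rmult_le_reg_l t); auto. field_simplify; [|lra]. nra. }
    destruct (has_sum_dom Bf _ _ HBf0 HBle (has_sum_scal _ (/ t) sA ltac:(left; apply Rinv_0_lt_compat; auto) HA)) as [sB HsB].
    assert (HAgle : forall p, Afun g p <= Afun f p).
    { intros p. rewrite Hpt. pose proof (HBf0 (snd p, fst p)). pose proof (HBf0 p). nra. }
    destruct (has_sum_dom (Afun g) _ _ (Afun_nonneg g) HAgle HA) as [sg Hsg].
    assert (Hsum : has_sum (Afun f) (sg + t * sB + t * sB)).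
    { apply has_sum_ext with (f := fun p => Afun g p + t * Bf p + t * Bf (snd p, fst p)).
      intros; rewrite Hpt; auto.
      apply has_sum_plus. intros; pose proof (Afun_nonneg g x); pose proof (HBf0 x); nra.
      intros x; pose proof (HBf0 (snd x, fst x)); nra.
      apply has_sum_plus; auto. apply Afun_nonneg. intros x; pose proof (HBf0 x); nra.
      apply has_sum_scal; [lra|auto].
      apply has_sum_scal; [lra|]. apply (has_sum_swap Bf); auto. }
    assert (EA : sA = sg + t * sB + t * sB) by (eapply has_sum_unique; eauto).
    assert (HbW : bdry b c W (sB + fin_sum c W)) by (exists sB; split; auto).
    assert (Hal : alpha * fin_sum mu W <= sB + fin_sum c W).
    { apply Halpha; auto.
      - intros E. assert (In x0 W) by (apply HW; auto). rewrite E in H; destruct H.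
      - apply NoDup_filter; auto.
      - intros x Hx. apply HW in Hx. apply Hs; auto. }
    assert (IH' := IH g l Hl Hg0 ltac:(intros x Hx; apply Hs; auto) Hk' sg Hsg).
    assert (Emu : fin_sum (fun x => mu x * f x) l = fin_sum (fun x => mu x * g x) l + t * fin_sum mu W).
    { unfold W. rewrite <- fin_sum_indic, <- fin_sum_scal, <- fin_sum_plus. apply fin_sum_ext.
      intros x _. unfold g. ring. }
    assert (Ec : fin_sum (fun x => c x * f x) l = fin_sum (fun x => c x * g x) l + t * fin_sum c W).
    { unfold W. rewrite <- fin_sum_indic, <- fin_sum_scal, <- fin_sum_plus. apply fin_sum_ext.
      intros x _. unfold g. ring. }
    rewrite Emu, Ec, EA.
    assert (t * (alpha * fin_sum mu W) <= t * (sB + fin_sum c W)) by (apply Rmult_le_compat_l; lra).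
    nra.
Qed.
End Coarea.

Lemma alg_cs (X Y a : R) : 0 <= X -> 0 <= Y -> 0 <= a ->
  (forall k, 0 < k -> 2 * a <= k * X + Y / k) -> a * a <= X * Y.
Proof. intros HX HY Ha H.
  destruct (Req_dec a 0) as [->|Ha0]; [nra|].
  destruct (Req_dec X 0) as [HX0|HX0].
  - exfalso. subst X. set (k := Y / a + 1).
    assert (Hk : 0 < k) by (unfold k; apply Rplus_le_lt_0_compat; [apply Rmult_le_pos; [lra| left; apply Rinv_0_lt_compat; lra]|]; lra).
    specialize (H k Hk). assert (Y / k < a).
    { apply (Rmult_lt_reg_r k); auto. unfold Rdiv. rewrite Rmult_assoc, Rinv_l by lra.
      unfold k. assert (Y / a * a = Y) by (field; lra). nra. }
    lra.
  - specialize (H (a / X)). assert (0 < a / X) by (apply Rdiv_lt_0_compat; lra).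
    specialize (H H0). replace (a / X * X) with a in H by (field; lra).
    replace (Y / (a / X)) with (Y * X / a) in H by (field; lra).
    assert (a <= Y * X / a) by lra.
    apply (Rmult_le_compat_l a) in H1; [|lra]. replace (a * (Y * X / a)) with (X * Y) in H1 by (field; lra). lra.
Qed.

Lemma sq_bound (Z w M : R) : 0 <= M -> Z * Z <= w * (M * M) -> Rabs Z <= sqrt w * M.
Proof. intros HM H. destruct (Rle_dec w 0) as [Hw|Hw].
  - rewrite sqrt_neg_0 by auto. assert (Z * Z <= 0) by nra. assert (Z = 0) by nra.
    subst. rewrite Rabs_R0. lra.
  - rewrite <- (sqrt_square M) by auto. rewrite <- sqrt_mult by nra.
    rewrite <- sqrt_Rsqr_abs. apply sqrt_le_1_alt. unfold Rsqr. auto.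
Qed.

Section Phi.
Context {V : Type} (b : V -> V -> R) (c n m : V -> R) (U : V -> Prop).
Hypothesis Hb0 : forall x y, 0 <= b x y.
Hypothesis Hbsym : forall x y, b x y = b y x.
Hypothesis Hc0 : forall x, 0 <= c x.
Hypothesis Hn : forall x, has_sum (fun y => b x y) (n x - c x).

Lemma key_phi (mu : V -> R) (alpha : R) (phi : V -> R) (l : list V) (Q : R) :
  (forall W, W <> [] -> NoDup W -> (forall x, In x W -> U x) ->
     forall s, bdry b c W s -> alpha * fin_sum mu W <= s) -> 0 <= alpha ->
  (forall x, 0 <= mu x) ->
  NoDup l -> (forall x, phi x <> 0 -> In x l) -> (forall x, In x l -> U x) ->
  Qmax b c phi Q ->
  0 <= Q /\
  (alpha * fin_sum (fun x => mu x * phi x ^ 2) l) * (alpha * fin_sum (fun x => mu x * phi x ^ 2) l)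
    <= Q * (2 * fin_sum (fun x => n x * phi x ^ 2) l - Q).
Proof.
  intros Halpha Hal0 Hmu0 Hl Hsupp HlU [s1 [s2 [Hs1 [Hs2 EQ]]]].
  set (D := fun p : V * V => b (fst p) (snd p) * (phi (fst p) - phi (snd p)) ^ 2) in *.
  set (S := fun p : V * V => b (fst p) (snd p) * (phi (fst p) + phi (snd p)) ^ 2).
  set (G := fun p : V * V => b (fst p) (snd p) * phi (fst p) ^ 2).
  set (G' := fun p : V * V => b (fst p) (snd p) * phi (snd p) ^ 2).
  assert (HD0 : forall p, 0 <= D p) by (intros; unfold D; apply Rmult_le_pos; auto; apply pow2_ge_0).
  assert (HS0 : forall p, 0 <= S p) by (intros; unfold S; apply Rmult_le_pos; auto; apply pow2_ge_0).
  assert (HG0 : forall p, 0 <= G p) by (intros; unfold G; apply Rmult_le_pos; auto; apply pow2_ge_0).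
  assert (HG'0 : forall p, 0 <= G' p) by (intros; unfold G'; apply Rmult_le_pos; auto; apply pow2_ge_0).
  assert (Es2 : s2 = fin_sum (fun x => c x * phi x ^ 2) l).
  { eapply has_sum_unique; eauto. apply has_sum_fin; auto.
    intros; apply Rmult_le_pos; auto; apply pow2_ge_0.
    intros x Hx. apply Hsupp. intro E. apply Hx. rewrite E. ring. }
  assert (HGb : forall L, NoDup L -> fin_sum G L <= fin_sum (fun x => (n x - c x) * phi x ^ 2) l).
  { intros L HL. apply (fubini_le b (fun x => n x - c x) (fun x => phi x ^ 2)); auto.
    intros; apply pow2_ge_0.
    intros p _ Hp. apply Hsupp. intro E; apply Hp; rewrite E; ring. }
  destruct (has_sum_exists G _ HG0 HGb) as [sG HsG].
  assert (HsGle : sG <= fin_sum (fun x => (n x - c x) * phi x ^ 2) l) by (eapply has_sum_lub; eauto).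
  assert (HsG' : has_sum G' sG).
  { apply has_sum_ext with (f := fun p => G (snd p, fst p)).
    intros [x y]; unfold G, G'; simpl. rewrite Hbsym; auto.
    apply (has_sum_swap G); auto. }
  assert (HS2 : forall p, S p <= 2 * G p + 2 * G' p).
  { intros p. unfold S, G, G'. pose proof (Hb0 (fst p) (snd p)).
    assert ((phi (fst p) + phi (snd p)) ^ 2 <= 2 * phi (fst p) ^ 2 + 2 * phi (snd p) ^ 2)
      by (pose proof (pow2_ge_0 (phi (fst p) - phi (snd p))); nra). nra. }
  assert (HGG : has_sum (fun p => 2 * G p + 2 * G' p) (2 * sG + 2 * sG)).
  { apply has_sum_plus; try (intros; specialize (HG0 x); specialize (HG'0 x); lra);
    apply has_sum_scal; auto; lra. }
  destruct (has_sum_dom S _ _ HS0 HS2 HGG) as [sS HsS].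
  assert (EDS : s1 + sS = 2 * sG + 2 * sG).
  { apply (has_sum_unique (fun p => D p + S p)). apply has_sum_plus; auto.
    eapply has_sum_ext; [|exact HGG]. intros p; unfold D, S, G, G'. ring. }
  set (f := fun x => phi x ^ 2).
  assert (Hf0 : forall x, 0 <= f x) by (intros; apply pow2_ge_0).
  assert (HA1 : forall p, Afun b f p <= / 2 * D p + / 2 * S p).
  { intros p. unfold Afun, f, D, S. set (u := phi (fst p)); set (v := phi (snd p)).
    pose proof (Hb0 (fst p) (snd p)).
    assert (Rabs (u ^ 2 - v ^ 2) <= / 2 * (u - v) ^ 2 + / 2 * (u + v) ^ 2).
    { apply Rabs_le. nra. } nra. }
  assert (HDSh : has_sum (fun p => / 2 * D p + / 2 * S p) (/ 2 * s1 + / 2 * sS)).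
  { apply has_sum_plus; try (intros; specialize (HD0 x); specialize (HS0 x); lra);
    apply has_sum_scal; auto; lra. }
  destruct (has_sum_dom (Afun b f) _ _ (Afun_nonneg b Hb0 f) HA1 HDSh) as [sA HsA].
  assert (HCO : alpha * fin_sum (fun x => mu x * f x) l <= / 2 * sA + fin_sum (fun x => c x * f x) l).
  { apply (coarea_k b c mu U alpha Hb0 Hbsym Hc0 Halpha (length (filter (fun x => bdec (f x <> 0%R)) l))); auto.
    intros x Hx. assert (phi x <> 0) by (intro E; apply Hx; unfold f; rewrite E; ring). auto. }
  assert (HAk : forall k, 0 < k -> sA <= / 2 * (k * s1 + / k * sS)).
  { intros k Hk. eapply has_sum_le with (f := Afun b f) (g := fun p => / 2 * (k * D p + / k * S p)); eauto.
    - intros p. unfold Afun, f, D, S. set (u := phi (fst p)); set (v := phi (snd p)).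
      pose proof (Hb0 (fst p) (snd p)).
      assert (Rabs (u ^ 2 - v ^ 2) <= / 2 * (k * (u - v) ^ 2 + / k * (u + v) ^ 2)).
      { apply Rabs_le. assert (0 < / k) by (apply Rinv_0_lt_compat; auto).
        assert (k * / k = 1) by (field; lra).
        assert (E1 : / k * (k * (u - v) + (u + v)) ^ 2 = k * (u - v) ^ 2 + / k * (u + v) ^ 2 + 2 * (u ^ 2 - v ^ 2)) by (field; lra).
        assert (E2 : / k * (k * (u - v) - (u + v)) ^ 2 = k * (u - v) ^ 2 + / k * (u + v) ^ 2 - 2 * (u ^ 2 - v ^ 2)) by (field; lra).
        assert (0 <= / k * (k * (u - v) + (u + v)) ^ 2) by (apply Rmult_le_pos; [lra|apply pow2_ge_0]).
        assert (0 <= / k * (k * (u - v) - (u + v)) ^ 2) by (apply Rmult_le_pos; [lra|apply pow2_ge_0]).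
        split; lra. }
      nra.
    - apply has_sum_scal; [lra|]. apply has_sum_plus.
      intros; specialize (HD0 x); nra.
      intros; specialize (HS0 x); assert (0 < / k) by (apply Rinv_0_lt_compat; auto); nra.
      apply has_sum_scal; auto; lra.
      apply has_sum_scal; auto. left; apply Rinv_0_lt_compat; auto. }
  set (P := / 2 * sS + s2).
  assert (Hs10 : 0 <= s1) by (eapply has_sum_nonneg; eauto).
  assert (HsS0 : 0 <= sS) by (eapply has_sum_nonneg; eauto).
  assert (Hs20 : 0 <= s2) by (eapply has_sum_nonneg; eauto).
  assert (HQ0 : 0 <= Q) by lra.
  assert (HP0 : 0 <= P) by (unfold P; lra).
  assert (HQP : Q + P <= 2 * fin_sum (fun x => n x * phi x ^ 2) l).
  { unfold P. rewrite EQ, Es2 in *.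
    assert (fin_sum (fun x => (n x - c x) * phi x ^ 2) l + fin_sum (fun x => c x * phi x ^ 2) l
            = fin_sum (fun x => n x * phi x ^ 2) l).
    { rewrite <- fin_sum_plus. apply fin_sum_ext. intros; ring. }
    lra. }
  assert (HN0 : 0 <= alpha * fin_sum (fun x => mu x * phi x ^ 2) l).
  { apply Rmult_le_pos; auto. apply fin_sum_nonneg. intros; apply Rmult_le_pos; auto; apply pow2_ge_0. }
  split; auto.
  apply Rle_trans with (Q * P); [|apply Rmult_le_compat_l; lra].
  apply alg_cs; auto.
  intros k Hk. specialize (HAk k Hk). unfold f in HCO. rewrite <- Es2 in HCO.
  unfold P. rewrite EQ.
  assert (0 < / k) by (apply Rinv_0_lt_compat; auto).
  assert (k * / k = 1) by (field; lra).
  assert (0 <= (k - 1) ^ 2 * / k * s2).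
  { apply Rmult_le_pos; auto. apply Rmult_le_pos; [apply pow2_ge_0| lra]. }
  unfold Rdiv. 
  assert (E1 : (k - 1) ^ 2 * / k * s2 = k * s2 + / k * s2 - 2 * s2) by (field; lra).
  nra.
Qed.
End Phi.

Lemma cv_const (a : R) : Un_cv (fun _ => a) a.
Proof. intros e He. exists 0%nat. intros. unfold Rdist. rewrite Rminus_diag, Rabs_R0. lra. Qed.

Lemma cv_scal (u : nat -> R) l a : Un_cv u l -> Un_cv (fun k => a * u k) (a * l).
Proof. intros H. apply CV_mult; auto. apply cv_const. Qed.

Lemma cmp2 {T} (f g1 g2 : T -> R) s a b al be : 0 <= al -> 0 <= be ->
  (forall x, 0 <= g1 x) -> (forall x, 0 <= g2 x) ->
  (forall x, f x <= al * g1 x + be * g2 x) -> has_sum f s -> has_sum g1 a -> has_sum g2 b ->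
  s <= al * a + be * b.
Proof. intros. apply (has_sum_le f (fun x => al * g1 x + be * g2 x)); auto. apply has_sum_plus.
  intros; specialize (H1 x); nra. intros; specialize (H2 x); nra.
  apply has_sum_scal; auto. apply has_sum_scal; auto. Qed.

Lemma sq_split (a b t : R) : 0 < t -> a ^ 2 <= (1 + t) * b ^ 2 + (1 + / t) * (a - b) ^ 2.
Proof. intros Ht. assert (0 <= / t * (t * b - (a - b)) ^ 2) by
  (apply Rmult_le_pos; [left; apply Rinv_0_lt_compat; auto| apply pow2_ge_0]).
  assert (/ t * (t * b - (a - b)) ^ 2 = t * b ^ 2 - 2 * b * (a - b) + / t * (a - b) ^ 2) by (field; lra).
  nra. Qed.

Lemma norm_cv {V} (m : V -> R) (phi : nat -> V -> R) (u : V -> R) Nm r N :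
  (forall x, 0 <= m x) ->
  (forall k, norm2 m (phi k) (Nm k)) -> (forall k, norm2 m (fun x => phi k x - u x) (r k)) ->
  Un_cv r 0 -> norm2 m u N -> Un_cv Nm N.
Proof.
  intros Hm HN Hr Hr0 HNu.
  assert (HN0 : 0 <= N) by (eapply has_sum_nonneg; eauto).
  assert (Hr0' : forall k, 0 <= r k) by (intros; eapply has_sum_nonneg; apply Hr).
  assert (HNk0 : forall k, 0 <= Nm k) by (intros; eapply has_sum_nonneg; apply HN).
  assert (Hw : forall (g : V -> R) x, 0 <= m x * g x ^ 2) by (intros; apply Rmult_le_pos; auto; apply pow2_ge_0).
  assert (Up : forall t k, 0 < t -> Nm k <= (1 + t) * N + (1 + / t) * r k).
  { intros t k Ht. assert (0 < / t) by (apply Rinv_0_lt_compat; auto).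
    assert (Hp : forall x, m x * phi k x ^ 2 <= (1 + t) * (m x * u x ^ 2) + (1 + / t) * (m x * (phi k x - u x) ^ 2)).
    { intros x. pose proof (Rmult_le_compat_l (m x) _ _ (Hm x) (sq_split (phi k x) (u x) t Ht)). lra. }
    exact (cmp2 _ _ (fun x => m x * (phi k x - u x) ^ 2) _ _ _ (1 + t) (1 + / t) ltac:(lra) ltac:(lra) (Hw u) (fun x => Hw (fun y => phi k y - u y) x) Hp (HN k) HNu (Hr k)). }
  assert (Lo : forall t k, 0 < t -> N <= (1 + t) * Nm k + (1 + / t) * r k).
  { intros t k Ht. assert (0 < / t) by (apply Rinv_0_lt_compat; auto).
    assert (Hp : forall x, m x * u x ^ 2 <= (1 + t) * (m x * phi k x ^ 2) + (1 + / t) * (m x * (phi k x - u x) ^ 2)).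
    { intros x. pose proof (Rmult_le_compat_l (m x) _ _ (Hm x) (sq_split (u x) (phi k x) t Ht)).
      replace ((u x - phi k x) ^ 2) with ((phi k x - u x) ^ 2) in H0 by ring. lra. }
    exact (cmp2 _ _ (fun x => m x * (phi k x - u x) ^ 2) _ _ _ (1 + t) (1 + / t) ltac:(lra) ltac:(lra) (Hw (phi k)) (fun x => Hw (fun y => phi k y - u y) x) Hp HNu (HN k) (Hr k)). }
  intros e He.
  set (t := Rmin (e / (4 * (N + 1))) 1).
  assert (Ht : 0 < t) by (unfold t; apply Rmin_glb_lt; [apply Rdiv_lt_0_compat; lra| lra]).
  assert (Ht1 : t <= 1) by (unfold t; apply Rmin_r).
  assert (HtN : 2 * t * N < e / 2).
  { assert (t <= e / (4 * (N + 1))) by (unfold t; apply Rmin_l).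
    assert (t * (4 * (N + 1)) <= e).
    { apply (Rmult_le_compat_r (4 * (N + 1))) in H; [|lra]. field_simplify in H; lra. }
    nra. }
  set (C := 1 + / t).
  assert (HC : 1 <= C) by (unfold C; assert (0 < / t) by (apply Rinv_0_lt_compat; auto); lra).
  destruct (Hr0 (e / (4 * C))) as [K HK]. apply Rdiv_lt_0_compat; lra.
  exists K. intros k Hk. specialize (HK k Hk). unfold Rdist in *. rewrite Rminus_0_r in HK.
  rewrite Rabs_right in HK by (apply Rle_ge; auto).
  assert (HCr : 2 * C * r k < e / 2).
  { apply (Rmult_lt_compat_l (2 * C)) in HK; [|lra]. replace (2 * C * (e / (4 * C))) with (e / 2) in HK by (field; lra). lra. }
  specialize (Up t k Ht). specialize (Lo t k Ht). fold C in Up, Lo.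
  apply Rabs_def1.
  - assert (t * N <= 2 * t * N) by nra. assert (C * r k <= 2 * C * r k) by (pose proof (Hr0' k); nra). lra.
  - assert (N - Nm k <= t * Nm k + C * r k) by lra.
    assert (t * Nm k <= t * ((1 + t) * N + C * r k)) by (apply Rmult_le_compat_l; lra).
    assert (t * ((1 + t) * N + C * r k) <= 2 * t * N + C * r k).
    { pose proof (Hr0' k). assert (t * t * N <= t * N) by (apply Rmult_le_compat_r; [lra| nra]). nra. }
    lra.
Qed.

Lemma Rabs_le_inv a b : Rabs a <= b -> - b <= a <= b.
Proof. intros H. pose proof (Rle_abs a). pose proof (Rle_abs (- a)). rewrite Rabs_Ropp in H1. lra. Qed.

Lemma phi_bounds {V : Type} (b : V -> V -> R) (c n m : V -> R) (U : V -> Prop)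
  (Hb0 : forall x y, 0 <= b x y) (Hbsym : forall x y, b x y = b y x) (Hc0 : forall x, 0 <= c x)
  (Hn : forall x, has_sum (fun y => b x y) (n x - c x))
  (Hn0 : forall x, 0 <= n x) (Hm0 : forall x, 0 <= m x)
  (an am dU : R)
  (Han : forall W, W <> [] -> NoDup W -> (forall x, In x W -> U x) ->
     forall s, bdry b c W s -> an * fin_sum n W <= s) (Han0 : 0 <= an)
  (Ham : forall W, W <> [] -> NoDup W -> (forall x, In x W -> U x) ->
     forall s, bdry b c W s -> am * fin_sum m W <= s) (Ham0 : 0 <= am)
  (HdU : forall x, U x -> dU * m x <= n x) (HdU0 : 0 <= dU)
  (phi : V -> R) (l : list V) (Q : R) :
  NoDup l -> (forall x, phi x <> 0 -> In x l) -> (forall x, In x l -> U x) ->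
  Qmax b c phi Q ->
  dU * (1 - sqrt (1 - an ^ 2)) * fin_sum (fun x => m x * phi x ^ 2) l <= Q /\
  (forall DU, (forall x, U x -> n x <= DU * m x) ->
     Q <= DU * (1 + sqrt (1 - an ^ 2)) * fin_sum (fun x => m x * phi x ^ 2) l /\
     (DU - sqrt (DU ^ 2 - am ^ 2)) * fin_sum (fun x => m x * phi x ^ 2) l <= Q /\
     Q <= (DU + sqrt (DU ^ 2 - am ^ 2)) * fin_sum (fun x => m x * phi x ^ 2) l).
Proof.
  intros Hl Hs HU HQ.
  destruct (key_phi b c n U Hb0 Hbsym Hc0 Hn n an phi l Q Han Han0 Hn0 Hl Hs HU HQ) as [HQ0 K1].
  set (Nn := fin_sum (fun x => n x * phi x ^ 2) l) in *.
  set (Nm := fin_sum (fun x => m x * phi x ^ 2) l) in *.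
  assert (HNn0 : 0 <= Nn) by (apply fin_sum_nonneg; intros; apply Rmult_le_pos; auto; apply pow2_ge_0).
  assert (HNm0 : 0 <= Nm) by (apply fin_sum_nonneg; intros; apply Rmult_le_pos; auto; apply pow2_ge_0).
  assert (HNd : dU * Nm <= Nn).
  { unfold Nm, Nn. rewrite <- fin_sum_scal. apply fin_sum_le. intros x Hx.
    pose proof (HdU x (HU x Hx)). pose proof (pow2_ge_0 (phi x)). nra. }
  set (s := sqrt (1 - an ^ 2)).
  assert (Hs0 : 0 <= s) by apply sqrt_pos.
  assert (Hs1 : s <= 1).
  { unfold s. apply Rle_trans with (sqrt 1); [apply sqrt_le_1_alt; pose proof (pow2_ge_0 an); lra| rewrite sqrt_1; lra]. }
  assert (B1 : Rabs (Q - Nn) <= s * Nn).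
  { apply sq_bound; auto. nra. }
  apply Rabs_le_inv in B1.
  split.
  - nra.
  - intros DU HDU.
    assert (HND : Nn <= DU * Nm).
    { unfold Nm, Nn. rewrite <- fin_sum_scal. apply fin_sum_le. intros x Hx.
      pose proof (HDU x (HU x Hx)). pose proof (pow2_ge_0 (phi x)). nra. }
    destruct (key_phi b c n U Hb0 Hbsym Hc0 Hn m am phi l Q Ham Ham0 Hm0 Hl Hs HU HQ) as [_ K2].
    fold Nn Nm in K2.
    assert (B2 : Rabs (Q - DU * Nm) <= sqrt (DU ^ 2 - am ^ 2) * Nm).
    { apply sq_bound; auto. nra. }
    apply Rabs_le_inv in B2.
    split; [nra| split; lra].
Qed.

Lemma fin_sum_pos {T} (mu : T -> R) W : W <> [] -> (forall x, 0 < mu x) -> 0 < fin_sum mu W.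
Proof. intros HW Hmu. destruct W as [|a W]; [congruence|]. simpl.
  assert (0 <= fin_sum mu W) by (apply fin_sum_nonneg; intros; left; auto). specialize (Hmu a). lra. Qed.

Lemma alpha_props {V} (b : V -> V -> R) (c mu : V -> R) (U : V -> Prop) a :
  (forall x, 0 < mu x) -> (forall x, 0 <= c x) -> is_alpha b c mu U a ->
  0 <= a /\ (forall W, W <> [] -> NoDup W -> (forall x, In x W -> U x) ->
     forall s, bdry b c W s -> a * fin_sum mu W <= s).
Proof. intros Hmu Hc [Hlow Hglb].
  assert (Hbd : forall W s, bdry b c W s -> 0 <= s).
  { intros W s [s1 [Hs1 ->]]. pose proof (has_sum_nonneg _ _ Hs1).
    assert (0 <= fin_sum c W) by (apply fin_sum_nonneg; auto). lra. }
  split.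
  - apply Hglb. intros r [W [HW [HWn [HWU [s [Hb ->]]]]]].
    pose proof (Hbd W s Hb). pose proof (fin_sum_pos mu W HW Hmu).
    apply Rmult_le_pos; auto. left; apply Rinv_0_lt_compat; auto.
  - intros W HW HWn HWU s Hb. assert (a <= s / fin_sum mu W) by (apply Hlow; exists W; repeat split; eauto).
    pose proof (fin_sum_pos mu W HW Hmu).
    apply (Rmult_le_compat_r (fin_sum mu W)) in H; [|lra]. field_simplify in H; lra.
Qed.

Theorem mainTheorem8
  (V : Type)
  (HV : exists e : nat -> V, (forall i j, e i = e j -> i = j) /\ (forall x, exists i, e i = x))
  (b : V -> V -> R) (c : V -> R)
  (Hb0 : forall x y, 0 <= b x y) (Hbxx : forall x, b x x = 0)
  (Hbsym : forall x y, b x y = b y x) (Hc0 : forall x, 0 <= c x)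
  (Hbsum : forall x, exists s, has_sum (fun y => b x y) s)
  (n : V -> R) (Hn : forall x, has_sum (fun y => b x y) (n x - c x))
  (Hnpos : forall x, 0 < n x)
  (m : V -> R) (Hm : forall x, 0 < m x)
  (U : V -> Prop) (HU : exists x, U x)
  (dU : R) (HdU : is_inf (fun r => exists x, U x /\ r = n x / m x) dU)
  (an : R) (Han : is_alpha b c n U an)
  (am : R) (Ham : is_alpha b c m U am) :
  forall (u : V -> R) (q N : R), QU_graph b c m U u q -> norm2 m u N ->
    dU * (1 - sqrt (1 - an ^ 2)) * N <= q /\
    (forall DU, is_sup (fun r => exists x, U x /\ r = n x / m x) DU ->
       q <= DU * (1 + sqrt (1 - an ^ 2)) * N /\
       (DU - sqrt (DU ^ 2 - am ^ 2)) * N <= q /\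
       q <= (DU + sqrt (DU ^ 2 - am ^ 2)) * N).
Proof.
  intros u q N HQU HN.
  destruct (alpha_props b c n U an Hnpos Hc0 Han) as [Han0 Han'].
  destruct (alpha_props b c m U am Hm Hc0 Ham) as [Ham0 Ham'].
  assert (HdU0 : 0 <= dU).
  { apply (proj2 HdU). intros r [x [Hx ->]]. left. apply Rdiv_lt_0_compat; auto. }
  assert (HdUm : forall x, U x -> dU * m x <= n x).
  { intros x Hx. assert (dU <= n x / m x) by (apply (proj1 HdU); eauto).
    pose proof (Hm x). apply (Rmult_le_compat_r (m x)) in H; [|lra]. field_simplify in H; lra. }
  destruct HQU as [phi [Hsupp [[r [Hr Hr0]] [_ [qs [Hqs Hqcv]]]]]].
  assert (Hch : forall k, {l : list V | NoDup l /\ (forall x, phi k x <> 0 -> In x l) /\ (forall x, In x l -> U x)}).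
  { intros k. apply constructive_indefinite_description. destruct (Hsupp k) as [l0 Hl0].
    exists (filter (fun x => bdec (phi k x <> 0)) (nodup dec_eq l0)).
    split; [apply NoDup_filter, NoDup_nodup|split].
    - intros x Hx. apply filter_In. split. apply nodup_In. apply Hl0; auto. apply bdec_true; auto.
    - intros x Hx. apply filter_In in Hx. destruct Hx as [_ Hx]. apply (proj1 (bdec_true _)) in Hx. apply Hl0; auto. }
  set (lk := fun k => proj1_sig (Hch k)).
  assert (Hlk : forall k, NoDup (lk k) /\ (forall x, phi k x <> 0 -> In x (lk k)) /\ (forall x, In x (lk k) -> U x))
    by (intros k; exact (proj2_sig (Hch k))).
  set (Nm := fun k => fin_sum (fun x => m x * phi k x ^ 2) (lk k)).
  assert (HNm : forall k, norm2 m (phi k) (Nm k)).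
  { intros k. destruct (Hlk k) as [H1 [H2 H3]]. unfold norm2, Nm. apply has_sum_fin; auto.
    intros; apply Rmult_le_pos; [left; auto| apply pow2_ge_0].
    intros x Hx. apply H2. intro E; apply Hx; rewrite E; ring. }
  assert (Hcv : Un_cv Nm N) by (apply (norm_cv m phi u Nm r N); auto; intros; left; auto).
  assert (HB : forall k, _) by (intros k; destruct (Hlk k) as [H1 [H2 H3]];
    exact (phi_bounds b c n m U Hb0 Hbsym Hc0 Hn ltac:(intros; left; auto) ltac:(intros; left; auto)
       an am dU Han' Han0 Ham' Ham0 HdUm HdU0 (phi k) (lk k) (qs k) H1 H2 H3 (Hqs k))).
  split.
  - apply Rle_cv_lim with (Un := fun k => dU * (1 - sqrt (1 - an ^ 2)) * Nm k) (Vn := qs); auto.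
    + intros k. apply (HB k).
    + apply cv_scal; auto.
  - intros DU HDU.
    assert (HDUm : forall x, U x -> n x <= DU * m x).
    { intros x Hx. assert (n x / m x <= DU) by (apply (proj1 HDU); eauto).
      pose proof (Hm x). apply (Rmult_le_compat_r (m x)) in H; [|lra]. field_simplify in H; lra. }
    split; [|split].
    + apply Rle_cv_lim with (Vn := fun k => DU * (1 + sqrt (1 - an ^ 2)) * Nm k) (Un := qs); auto.
      * intros k. apply (proj2 (HB k) DU HDUm).
      * apply cv_scal; auto.
    + apply Rle_cv_lim with (Un := fun k => (DU - sqrt (DU ^ 2 - am ^ 2)) * Nm k) (Vn := qs); auto.
      * intros k. apply (proj2 (HB k) DU HDUm).
      * apply cv_scal; auto.
    + apply Rle_cv_lim with (Vn := fun k => (DU + sqrt (DU ^ 2 - am ^ 2)) * Nm k) (Un := qs); auto.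
      * intros k. apply (proj2 (HB k) DU HDUm).
      * apply cv_scal; auto.
Qed.
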